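(* Let $m\geqslant 8$ with $m\equiv 0\pmod 4$, $d=(m-2)/2$, and $f(x)=x^{m-1}$. For every $\alpha\in\mathbb F_{2^n}^*$, the polynomial $(L_\alpha f)'$ has exactly $(d-1)/2$ distinct double roots in $\overline{\mathbb F}_2$, namely $\tau_1,\dots,\tau_{(d-1)/2}$ given by $\tau_i=\frac{\alpha^2}{1+\theta_i}+\frac{\alpha^2}{1+\theta_i^2}$, where $\theta_1,\dots,\theta_{(d-1)/2}$ are $(d-1)/2$ distinct $d$-th roots of unity in $\overline{\mathbb F}_2\setminus\{1\}$ chosen such that $\theta_i\theta_j\neq 1$ for $i\neq j$.
   Context: $D_\alpha f(x)=f(x+\alpha)+f(x)$. For $m\equiv 0\pmod 4$, $d=(m-2)/2$ and $f$ of degree at most $m$, $L_\alpha f$ is the unique polynomial of degree at most $d$ such that $(L_\alpha f)(x(x+\alpha))=D_\alpha f(x)$. *)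

(* Defs.v *)
From HB Require Import structures.
From mathcomp Require Import all_boot all_order all_algebra.
Set Implicit Arguments. Unset Strict Implicit. Unset Printing Implicit Defensive.
Import GRing.Theory.
Local Open Scope ring_scope.

Definition Dalpha (K : fieldType) (alpha : K) (f : {poly K}) : {poly K} :=
  f \Po ('X + alpha%:P) + f.

Definition is_Lalpha (K : fieldType) (d : nat) (alpha : K) (f g : {poly K}) : Prop :=
  (size g <= d.+1)%N /\ g \Po ('X * ('X + alpha%:P)) = Dalpha alpha f.

Definition tau_of (K : fieldType) (alpha theta : K) : K :=
  alpha ^+ 2 / (1 + theta) + alpha ^+ 2 / (1 + theta ^+ 2).

(* Main.v *)
Require Import Defs.
From HB Require Import structures.
From mathcomp Require Import all_boot all_order all_algebra.
From mathcomp Require Import ring zify.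
Import GRing.Theory.
Local Open Scope ring_scope.

Section S.
Context {K : fieldType} (hK : 2%N \in [pchar K]) {alpha : K} (halpha0 : alpha != 0).

Lemma two0 : (2%:R : K) = 0.
Proof. exact: pcharf0 hK. Qed.

Lemma add2 (x : K) : x + x = 0.
Proof. by rewrite -mulr2n -mulr_natr two0 mulr0. Qed.

Lemma natr_odd (k : nat) : (k%:R : K) = (odd k)%:R.
Proof.
elim: k => // k IH; rewrite -addn1 natrD IH /= addn1 /=.
case: (odd k) => /=; [by rewrite -natrD addn1 two0 | by rewrite add0r].
Qed.

Lemma padd2 (p : {poly K}) : p + p = 0.
Proof. by rewrite -mulr2n -mulr_natr -polyC_natr two0 mulr0. Qed.

Local Notation sh := ('X + alpha%:P).
Local Notation u := ('X * ('X + alpha%:P)).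

Lemma sh_sh : sh \Po sh = 'X.
Proof. by rewrite comp_polyD comp_polyX comp_polyC -addrA -polyCD add2 addr0. Qed.

Lemma u_sh : u \Po sh = u.
Proof.
rewrite comp_polyM sh_sh comp_polyX mulrC. done.
Qed.

Lemma size_u : size u = 3%N.
Proof. by rewrite size_mul ?size_polyX ?size_XaddC ?polyX_eq0 // -size_poly_eq0 size_XaddC. Qed.

Lemma const_inv (r : {poly K}) : (size r <= 2)%N -> r \Po sh = r -> r = (r`_0)%:P.
Proof.
move=> hs hr.
have rE : r = (r`_0)%:P + (r`_1)%:P * 'X.
  apply/polyP => i; rewrite coefD coefC coefCM coefX.
  case: i => [|[|i]] /=; rewrite ?mulr0 ?mulr1 ?addr0 ?add0r //.
  by rewrite nth_default //; apply: leq_trans hs _.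
have : (r \Po sh).[0] = r.[0] by rewrite hr.
rewrite horner_comp hornerD hornerX hornerC add0r.
rewrite [in LHS]rE [in RHS]rE !(hornerD, hornerC, hornerM, hornerX) mulr0 addr0.
move/(canRL (addKr _)); rewrite addNr => /eqP; rewrite mulf_eq0 (negPf halpha0) orbF.
by move/eqP=> h1; rewrite [LHS]rE h1 mul0r addr0.
Qed.

Lemma exists_inv (k : nat) (p : {poly K}) : (size p <= k)%N -> p \Po sh = p ->
  exists q, q \Po u = p.
Proof.
elim: k p => [|k IH] p hs hp.
  by exists 0; rewrite comp_poly0; move: hs; rewrite leqn0 size_poly_eq0 => /eqP->.
have u0 : u != 0 by rewrite -size_poly_eq0 size_u.
have hdiv := divp_eq p u.
set q0 := p %/ u in hdiv; set r := p %% u in hdiv.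
have hr : (size r < size u)%N by rewrite ltn_modp.
have hr' : (size (r \Po sh) < size u)%N by rewrite size_comp_poly2 ?size_XaddC.
have e : p = (q0 \Po sh) * u + (r \Po sh).
  by rewrite -[LHS]hp [in LHS]hdiv comp_polyD comp_polyM u_sh.
have hq : q0 \Po sh = q0.
  by rewrite /q0 {2}e divp_addl_mul_small.
have hrr : r \Po sh = r.
  by rewrite /r {2}e modp_addl_mul_small.
rewrite size_u in hr; have rE := const_inv r (ltnSE hr) hrr.
have [q' hq'] : exists q', q' \Po u = q0.
  apply: IH hq; rewrite /q0 size_divp // size_u.
  by move: hs; case: (size p) => //= s; lia.
exists (q' * 'X + (r`_0)%:P).
by rewrite comp_polyD comp_polyM comp_polyX comp_polyC hq' -rE -hdiv.
Qed.

Lemma D_inv (f : {poly K}) : Dalpha alpha f \Po sh = Dalpha alpha f.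
Proof. by rewrite /Dalpha comp_polyD -comp_polyA sh_sh comp_polyXr addrC. Qed.


Lemma opp2 (x : K) : - x = x.
Proof. by have := add2 x; move/eqP; rewrite addr_eq0 => /eqP h; rewrite -h. Qed.

Lemma onept {a : K} : a != 1 -> 1 + a != 0.
Proof. by move=> h; apply: contra h; rewrite addr_eq0 opp2 eq_sym. Qed.

Definition rr (t : K) := alpha / (1 + t).

Lemma rr_inj {a b : K} : a != 1 -> b != 1 -> rr a = rr b -> a = b.
Proof.
move=> ha hb /eqP; rewrite /rr eqr_div ?onept // => /eqP /(mulfI halpha0).
by move/addrI.
Qed.

Lemma rr_cross {a b : K} : a != 1 -> b != 1 -> rr a = rr b + alpha -> a * b = 1.
Proof.
move=> ha hb h.
have ha' := onept ha; have hb' := onept hb.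
have e : rr a * ((1 + a) * (1 + b)) = (rr b + alpha) * ((1 + a) * (1 + b)) by rewrite h.
have e2 : rr a * ((1 + a) * (1 + b)) = alpha * (1 + b) by rewrite /rr; field; rewrite ha'.
have e3 : (rr b + alpha) * ((1 + a) * (1 + b)) = alpha * ((1 + a) * (2%:R + b)).
  by rewrite /rr; field; rewrite hb'.
move: e; rewrite e2 e3 two0 add0r => /(mulfI halpha0).
rewrite mulrDl mul1r (addrC b) => /addIr <-. done.
Qed.

Lemma sq_ne1 {a : K} : a != 1 -> a * a != 1.
Proof.
move=> ha; apply/eqP => h; have := onept ha.
have h2 : (1 + a) ^+ 2 = 0.
  rewrite sqrrD expr1n mul1r -mulr_natr two0 mulr0 addr0.
  by rewrite expr2 h add2.
by move/eqP: h2; rewrite expf_eq0 /= => ->.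
Qed.

Lemma tau_rr (t : K) : t != 1 -> tau_of alpha t = rr t * (rr t + alpha).
Proof.
move=> ht; have ht' := onept ht.
rewrite /tau_of (_ : 1 + t ^+ 2 = (1 + t) ^+ 2); last first.
  by rewrite sqrrD expr1n mul1r -mulr_natr two0 mulr0 addr0.
rewrite /rr; field; by rewrite ht'.
Qed.

Lemma root_rr {d : nat} {t : K} : t != 1 -> t ^+ d = 1 ->
  (rr t + alpha) ^+ d + rr t ^+ d = 0 /\ (rr t + alpha + alpha) ^+ d + (rr t + alpha) ^+ d = 0.
Proof.
move=> ht htd; have ht' := onept ht.
have e : rr t + alpha = t * rr t + 2%:R * rr t by rewrite /rr; field; rewrite ht'.
rewrite two0 mul0r addr0 in e.
by rewrite -addrA add2 addr0 e exprMn htd mul1r add2.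
Qed.

Lemma tau_inj {a b : K} : a != 1 -> b != 1 -> tau_of alpha a = tau_of alpha b ->
  a = b \/ a * b = 1.
Proof.
move=> ha hb; rewrite !tau_rr // => h.
have : (rr a - rr b) * (rr a + rr b + alpha) = 0.
  have -> : (rr a - rr b) * (rr a + rr b + alpha) =
    rr a * (rr a + alpha) - rr b * (rr b + alpha) by ring.
  by rewrite h subrr.
move/eqP; rewrite mulf_eq0 => /orP [/eqP|/eqP] e.
  by left; apply: rr_inj => //; apply/eqP; rewrite -subr_eq0 e.
right; apply: rr_cross => //; move/eqP: e; rewrite addrC addrA addr_eq0 opp2 addrC => /eqP.
by move=> <-; rewrite -addrA add2 addr0.
Qed.


Lemma main_part (d k : nat) (g : {poly K}) (theta : 'I_k -> K) :
  odd d -> (k + k = d.-1)%N ->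
  g \Po u = Dalpha alpha 'X^(d.*2.+1) ->
  (forall i, theta i ^+ d = 1) -> (forall i, theta i != 1) -> injective theta ->
  (forall i j, i != j -> theta i * theta j != 1) ->
  exists c : K, c != 0 /\
    g^`() = c%:P * (\prod_(i <- enum 'I_k) ('X - (tau_of alpha (theta i))%:P)) ^+ 2.
Proof.
move=> hd hk hg h1 h2 h3 h4.
have d0 : (0 < d)%N by case: d hd {hk h1 hg}.
set P : {poly K} := sh ^+ d + 'X^d.
have hder : (g^`() \Po u) * alpha%:P = P ^+ 2.
  have := congr1 (fun p : {poly K} => p^`()) hg; rewrite /= deriv_comp.
  have -> : u^`() = alpha%:P.
    by rewrite derivM derivD !derivX derivC addr0 mul1r mulr1 addrC addrA padd2 add0r.
  move=> ->; rewrite /Dalpha derivD deriv_comp derivXn derivD derivX derivC addr0 mulr1.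
  have eN : 'X^((d.*2.+1).-1) *+ d.*2.+1 = 'X^(d.*2) :> {poly K}.
    by rewrite -mulr_natr -polyC_natr natr_odd /= odd_double /= mulr1.
  rewrite eN comp_Xn_poly /P sqrrD mulr2n padd2 addr0 -!exprM muln2.
  done.
set rs := [seq rr (theta i) | i <- enum 'I_k] ++ [seq rr (theta i) + alpha | i <- enum 'I_k].
have hroot : all (root P) rs.
  apply/allP => z; rewrite mem_cat => /orP [] /mapP [i _ ->];
  rewrite /root /P !hornerE; have [e1 e2] := root_rr (h2 i) (h1 i).
    by rewrite e1.
  by rewrite e2.
have huniq : uniq rs.
  rewrite cat_uniq; apply/and3P; split.
  - rewrite map_inj_uniq ?enum_uniq // => i j e; apply: h3; exact: rr_inj (h2 i) (h2 j) e.
  - apply/hasPn => z /mapP [j _ ->]; apply/mapP => -[i _ e].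
    have H := rr_cross (h2 i) (h2 j) (esym e).
    case: (eqVneq i j) => [eij|ne].
      by move: H; rewrite eij => /eqP; rewrite (negPf (sq_ne1 (h2 j))).
    by move/eqP: H; rewrite (negPf (h4 _ _ ne)).
  - rewrite map_inj_uniq ?enum_uniq // => i j /addIr e; apply: h3; exact: rr_inj (h2 i) (h2 j) e.
have [q hq] : exists q : {poly K}, P = q * \prod_(z <- rs) ('X - z%:P).
  by apply: uniq_roots_prod_XsubC hroot _; rewrite uniq_rootsE.
set Pi := \prod_(z <- rs) ('X - z%:P) in hq.
have sPi : size Pi = d.
  by rewrite size_prod_XsubC size_cat !size_map -enumT size_enum_ord hk; lia.
have P0 : P != 0.
  apply/negP => /eqP e; have := congr1 (horner^~ 0) e; rewrite /P !hornerE.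
  rewrite expr0n eqn0Ngt d0 /= addr0 => /eqP; rewrite expf_eq0 (negPf halpha0) andbF.
  done.
have sP : (size P <= d)%N.
  have ssh : size (sh ^+ d) = d.+1.
    by rewrite polySpred ?monic_neq0 ?monic_exp ?monicXaddC // size_exp size_XaddC mul1n.
  have s1 : (size P <= d.+1)%N.
    by rewrite /P (leq_trans (size_polyD _ _)) // ssh size_polyXn maxnn.
  have cd : P`_d = 0.
    rewrite /P coefD coefXn eqxx.
    have : lead_coef (sh ^+ d) = 1 by apply/monicP; rewrite monic_exp ?monicXaddC.
    by rewrite lead_coefE ssh /= => ->; rewrite add2.
  move: s1; rewrite leq_eqVlt => /orP [/eqP es|] //.
  by move: P0; rewrite -lead_coef_eq0 lead_coefE es /= cd eqxx.
have q0 : q != 0 by apply: contra P0 => /eqP q0; rewrite hq q0 mul0r.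
have Pi0 : Pi != 0 by rewrite -size_poly_eq0 sPi -lt0n.
have sq : (size q <= 1)%N.
  move: sP; rewrite hq size_mul // sPi.
  have hn : forall a b : nat, (0 < b)%N -> ((a + b).-1 <= b)%N -> (a <= 1)%N by move=> a b; lia.
  exact: hn d0.
set c := q`_0.
have hc : q = c%:P by apply: size1_polyC.
have c0 : c != 0 by rewrite -polyC_eq0 -hc.
set Pt := \prod_(i <- enum 'I_k) ('X - (tau_of alpha (theta i))%:P).
have hPi : Pi = Pt \Po u.
  rewrite /Pi big_cat !big_map /= -big_split /= /Pt.
  rewrite (big_morph (fun p => p \Po u) (fun p q => comp_polyM p q u) (comp_polyC 1 u)).
  rewrite -enumT polyC1.
  apply: eq_bigr => i _; rewrite comp_polyB comp_polyX comp_polyC tau_rr //.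
  move: (rr (theta i)) => a.
  rewrite polyCM polyCD.
  move: ('X : {poly K}) (a%:P) (alpha%:P) => X A B.
  have -> : (X - A) * (X - (A + B)) = X * (X + B) - A * (A + B) + 2%:R * (A * (A + B) - (A + B) * X).
    by ring.
  by rewrite -polyC_natr two0 mul0r addr0.
have hP : P = (c%:P * Pt) \Po u by rewrite hq hc hPi comp_polyM comp_polyC.
exists (c ^+ 2 / alpha); split.
  by rewrite mulf_neq0 ?expf_neq0 ?invr_eq0.
have e : (g^`() * alpha%:P - (c%:P * Pt) ^+ 2) \Po u = 0.
  by rewrite comp_polyB comp_polyM comp_polyC hder expr2 comp_polyM -hP -expr2 subrr.
move/eqP: e; rewrite comp_poly_eq0 ?size_u // subr_eq0 => /eqP e.
have a0 : alpha%:P != 0 :> {poly K} by rewrite polyC_eq0.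
apply: (mulIf a0); rewrite e exprMn [RHS]mulrAC -polyCM mulfVK // polyC_exp; reflexivity.
Qed.

End S.

Theorem lemma2p5 (K : closedFieldType) (hK : 2%N \in [pchar K])
  (m n : nat) (hm8 : (8 <= m)%N) (hm4 : (m %% 4 = 0)%N) (hn : (0 < n)%N)
  (alpha : K) (halpha_in : alpha ^+ (2 ^ n) = alpha) (halpha0 : alpha != 0) :
  let d := ((m - 2) %/ 2)%N in
  let f : {poly K} := 'X^(m - 1) in
  (exists g : {poly K}, is_Lalpha d alpha f g) /\
  forall g : {poly K}, is_Lalpha d alpha f g ->
  forall theta : 'I_((d - 1) %/ 2) -> K,
    (forall i, theta i ^+ d = 1) ->
    (forall i, theta i != 1) ->
    injective theta ->
    (forall i j, i != j -> theta i * theta j != 1) ->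
    injective (fun i => tau_of alpha (theta i)) /\
    (forall x : K, mup x g^`() = 2%N <-> exists i, x = tau_of alpha (theta i)).
Proof.
move=> d f.
have [t ht] : exists t, m = (t * 4)%N.
  by exists (m %/ 4)%N; rewrite {1}(divn_eq m 4) hm4 addn0.
have hdt : d = (t.-1).*2.+1 by rewrite /d ht -muln2; lia.
have hd : odd d by rewrite hdt /= odd_double.
have hk : ((d - 1) %/ 2 + (d - 1) %/ 2 = d.-1)%N by rewrite hdt; lia.
have hf : (m - 1 = d.*2.+1)%N by rewrite hdt ht -!muln2; lia.
split.
  set p := Dalpha alpha f.
  have [q hq] := exists_inv hK halpha0 _ p (leqnn (size p)) (D_inv hK f).
  exists q; split => //.
  have [->|q0] := eqVneq q 0; first by rewrite size_poly0.
  have sp : (size p <= m)%N.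
    rewrite /p /Dalpha /f comp_Xn_poly (leq_trans (size_polyD _ _)) //.
    have ssh : size (('X + alpha%:P) ^+ (m - 1)) = (m - 1).+1.
      by rewrite polySpred ?monic_neq0 ?monic_exp ?monicXaddC // size_exp size_XaddC mul1n.
    rewrite ssh size_polyXn maxnn; lia.
  have : size p = ((size q).-1 * 2).+1.
    rewrite -hq polySpred; last by rewrite comp_poly_eq0 ?size_u.
    by rewrite size_comp_poly size_u.
  move=> e; rewrite e in sp.
  have hn' : forall a : nat, (0 < a)%N -> (((a.-1 * 2).+1 <= t * 4)%N) -> (a <= d.+1)%N.
    by move=> a; rewrite hdt; lia.
  apply: hn'; first by rewrite size_poly_gt0.
  by rewrite -ht.
move=> g [_ hg] theta h1 h2 h3 h4.
rewrite /f hf in hg.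
have [c [c0 hg']] := main_part hK halpha0 _ _ _ _ hd hk hg h1 h2 h3 h4.
have tinj : injective (fun i => tau_of alpha (theta i)).
  move=> i j /= e.
  case: (tau_inj hK halpha0 (h2 i) (h2 j) e) => [/h3 //|H].
  case: (eqVneq i j) => // ne.
  by have := h4 i j ne; rewrite H eqxx.
split => // x.
set s := [seq tau_of alpha (theta i) | i <- enum 'I_((d - 1) %/ 2)].
have us : uniq s by rewrite map_inj_uniq ?enum_uniq.
rewrite hg' mupMr ?rootC // -(big_map (fun i => tau_of alpha (theta i)) xpredT (fun z => 'X - z%:P)) -/s expr2 -big_cat mu_prod_XsubC count_cat.
rewrite count_uniq_mem //.
split.
  case hx: (x \in s) => //= _.
  by move/mapP: hx => [i _ ->]; exists i.
move=> [i ->]; suff -> : tau_of alpha (theta i) \in s by [].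
by apply: (map_f (fun j => tau_of alpha (theta j))); rewrite mem_enum.
Qed.
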